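(* Let $h,n\geq 2$. If every subgroup of $G=S_h\times S_n$ is a symmetry group with respect to $(h,n)$, then $\gcd(h,n!)=1$.
   Context: Permutations compose as $(\sigma\tau)(x)=\sigma(\tau(x))$. Let $\mathcal{P}=(S_n)^h$ (preference profiles), with $G$ acting by $(p^{(\varphi,\psi)})_i=\psi\,p_{\varphi^{-1}(i)}$. A social preference function (SPF) is any $F:\mathcal{P}\to S_n$; its symmetry group is $G(F)=\{(\varphi,\psi)\in G: F(p^{(\varphi,\psi)})=\psi F(p)\ \forall p\}$. $U\leq G$ is a symmetry group with respect to $(h,n)$ if $U=G(F)$ for some SPF $F$. *)

(* Defs.v *)
From mathcomp Require Import all_boot all_fingroup.
Set Implicit Arguments. Unset Strict Implicit. Unset Printing Implicit Defensive.
Local Open Scope group_scope.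

(* Convention: mathcomp permutation product is left-to-right,
   (s * t) x = t (s x); so the paper's composition sigma tau (= sigma o tau)
   is written  tau * sigma  here. *)

Definition Gtype (h n : nat) := ('S_h * 'S_n)%type.

Definition profile (h n : nat) := {ffun 'I_h -> 'S_n}.

(* (p^(phi,psi))_i = psi o p_{phi^-1(i)} *)
Definition prof_act (h n : nat) (p : profile h n) (g : Gtype h n) : profile h n :=
  [ffun i => p (g.1^-1 i) * g.2].

Definition SPF (h n : nat) := profile h n -> 'S_n.

Definition symgroup (h n : nat) (F : SPF h n) : {set Gtype h n} :=
  [set g : Gtype h n | [forall p : profile h n, F (prof_act p g) == F p * g.2]].

Definition is_symmetry_group (h n : nat) (U : {set Gtype h n}) : Prop :=
  exists F : SPF h n, U = symgroup F.

(* Main.v *)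
Require Import Defs.
From mathcomp Require Import all_boot all_fingroup all_solvable zify.


Definition phin (d k : nat) : nat :=
  if (k %% d).+1 < d then k.+1 else k - k %% d.

Lemma phin_lt0 (d h k : nat) : k < h -> 0 < d -> d %| h -> phin d k < h.
Proof.
move=> Hk d0 /dvdnP [m hm]; rewrite /phin.
rewrite hm in Hk *.
have e := divn_eq k d; have r := ltn_pmod k d0.
move: (k %/ d) (k %% d) e r Hk => q r' e r Hk.
case: ifP => H.
- have [le|lt] := leqP m q; nia.
- lia.
Qed.

Lemma phin_lt (d h : nat) (k : 'I_h) : 0 < d -> d %| h -> phin d k < h.
Proof. exact: (@phin_lt0 d h k (ltn_ord k)). Qed.

Definition phio (d h : nat) (d0 : 0 < d) (dh : d %| h) (k : 'I_h) : 'I_h :=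
  Ordinal (@phin_lt d h k d0 dh).

Lemma phio_inj d h d0 dh : injective (@phio d h d0 dh).
Proof.
move=> a b /(congr1 val) /=; rewrite /phin => E; apply/val_inj => /=.
have ea := divn_eq a d; have ra := ltn_pmod a d0.
have eb := divn_eq b d; have rb := ltn_pmod b d0.
move: E ea ra eb rb.
move: (a %/ d) (a %% d) (b %/ d) (b %% d) => qa xa qb xb.
move: (nat_of_ord a) (nat_of_ord b) => A B.
case: ifP => H1; case: ifP => H2 E ea ra eb rb.
all: subst A B.
- lia.
- have [lt|le] := ltnP qa qb.
  + have := leq_mul lt (leqnn d); lia.
  + have := leq_mul le (leqnn d); lia.
- have [lt|le] := ltnP qb qa.
  + have := leq_mul lt (leqnn d); lia.
  + have := leq_mul le (leqnn d); lia.
- nia.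
Qed.

Definition phip d h d0 dh : 'S_h := perm (@phio_inj d h d0 dh).

Lemma phin_mod d k : 0 < d ->
  (phin d k) %% d = if (k %% d).+1 < d then (k %% d).+1 else 0.
Proof.
move=> d0; rewrite /phin.
have e := divn_eq k d; have r := ltn_pmod k d0.
case: ifP => H.
- have -> : k.+1 = k %/ d * d + (k %% d).+1 by rewrite addnS -e.
  by rewrite modnMDl modn_small.
- have -> : k - k %% d = k %/ d * d by rewrite {1}e addnK.
  by rewrite modnMl.
Qed.

Local Open Scope group_scope.

Theorem mainTheorem11 (h n : nat) :
  2 <= h -> 2 <= n ->
  (forall U : {group Gtype h n}, is_symmetry_group (U : {set Gtype h n})) ->
  coprime h n`!.
Proof.
move=> h2 n2 HU; apply/negPn/negP => nc.
set d := pdiv (gcdn h n`!).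
have g1 : 1 < gcdn h n`!.
  have : 0 < gcdn h n`! by rewrite gcdn_gt0; apply/orP; left; lia.
  rewrite /coprime in nc; case: (gcdn h n`!) nc => [|[|m]] //.
have pd : prime d by apply: pdiv_prime.
have dg : d %| gcdn h n`! by apply: pdiv_dvd.
have dh : d %| h by apply: dvdn_trans dg (dvdn_gcdl _ _).
have dn : d %| n`! by apply: dvdn_trans dg (dvdn_gcdr _ _).
have d0 : 0 < d by apply: prime_gt0.
have [psi _ opsi] : {x : 'S_n | x \in [set: 'S_n] & #[x] = d}.
  apply: Cauchy => //; by rewrite cardsT card_Sn.
set phi := @phip d h d0 dh.
set g : Gtype h n := (phi, psi).
have [F EF] := HU <[g]>%G.
have gin : g \in symgroup F by rewrite -EF cycle_id.
set P : profile h n := [ffun i : 'I_h => psi ^+ (i %% d)].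
have Pfix : prof_act P g = P.
  apply/ffunP => i; rewrite /prof_act !ffunE /=.
  have -> : i = phi (phi^-1 i) by rewrite permKV.
  rewrite permK; move: (phi^-1 i) => k; rewrite /phi /phip permE /= phin_mod // -expgSr.
  case: ifP => // Hc.
  have r := ltn_pmod k d0.
  have -> : (k %% d).+1 = d by lia.
  by rewrite -opsi expg_order.
move: gin; rewrite inE => /forallP /(_ P) /eqP; rewrite Pfix /= => E.
have psi1 : psi = 1 by apply: (mulgI (F P)); rewrite mulg1 -E.
move: opsi; rewrite psi1 order1 => d1; move: pd; rewrite -d1.
by [].
Qed.
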